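(* Let $t>0$, $0<\delta<1$, $k>-t\frac{\ln\left(\frac{2}{1+\delta}-1\right)}{\ln(1+\delta)}$, and $w\ge0$. Then for all sufficiently large $m$, $$\frac{\left(\frac12+\frac12\left(1-\frac{k\ln m}{m}\right)^w\right)^m}{m^{-tw}+(1+\delta)^{-m}}<1.$$
   Context: $\ln$ denotes the natural logarithm. *)

(* Defs.v *)
From Stdlib Require Import Reals.
Open Scope R_scope.

(* Main.v *)
Require Import Defs.
From Stdlib Require Import Reals Lra Psatz.
Open Scope R_scope.

Lemma exp_mono x y : x <= y -> exp x <= exp y.
Proof. intros [H|H]. left; apply exp_increasing; auto. subst; lra. Qed.

Lemma ln_le_sub1 z : 0 < z -> ln z <= z - 1.
Proof. intros Hz. pose proof (exp_ineq1_le (ln z)). rewrite exp_ln in H; lra. Qed.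

Lemma ln_ge0 z : 1 <= z -> 0 <= ln z.
Proof. intros [H|H]. left. rewrite <- ln_1. apply ln_increasing; lra. subst; rewrite ln_1; lra. Qed.

Lemma ln_le_2sqrt n : 0 < n -> ln n <= 2 * sqrt n.
Proof.
  intros Hn. assert (Hs : 0 < sqrt n) by (apply sqrt_lt_R0; lra).
  replace n with (sqrt n * sqrt n) at 1 by (apply sqrt_sqrt; lra).
  rewrite ln_mult by lra. pose proof (ln_le_sub1 _ Hs). lra.
Qed.

Theorem lemma6 (t delta k w : R)
  (ht : 0 < t) (hd0 : 0 < delta) (hd1 : delta < 1)
  (hk : k > - t * ln (2 / (1 + delta) - 1) / ln (1 + delta))
  (hw : 0 <= w) :
  exists M : nat, forall m : nat, (M <= m)%nat ->
    (/2 + /2 * Rpower (1 - k * ln (INR m) / INR m) w) ^ m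
    / (Rpower (INR m) (- t * w) + / (1 + delta) ^ m) < 1.
Proof.
  assert (hk2 : 2 * t < k).
  { assert (Hl : 0 < ln (1 + delta)) by (rewrite <- ln_1; apply ln_increasing; lra).
    assert (Hq : 0 < 2 / (1 + delta) - 1).
    { apply Rlt_Rminus. apply (Rmult_lt_reg_r (1+delta)); [lra|].
      field_simplify; lra. }
    assert (Hprod : ln (2 / (1 + delta) - 1) + 2 * ln (1 + delta) <= 0).
    { replace (2 * ln (1 + delta)) with (ln (1+delta) + ln (1+delta)) by ring.
      rewrite <- !ln_mult by (try apply Rmult_lt_0_compat; lra).
      replace ((2 / (1 + delta) - 1) * ((1 + delta) * (1 + delta))) with (1 - delta*delta)
        by (field; lra).
      pose proof (ln_le_sub1 (1 - delta * delta) ltac:(nra)). nra. }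
    assert (E : - t * ln (2 / (1 + delta) - 1) / ln (1 + delta) >= 2 * t).
    { apply Rle_ge. apply (Rmult_le_reg_r (ln (1+delta))); [lra|].
      field_simplify; [|lra]. nra. }
    lra. }
  set (eps := k / (2 * t) - 1).
  assert (Heps : 0 < eps).
  { unfold eps. apply Rlt_Rminus. apply (Rmult_lt_reg_r (2*t)); [lra|].
    field_simplify; lra. }
  assert (Hk0 : 0 < k) by lra.
  set (eta := Rmin (/ (2 * k)) (eps / (w * k + 1))).
  assert (Heta : 0 < eta).
  { unfold eta. apply Rmin_pos. apply Rinv_0_lt_compat; lra.
    apply Rdiv_lt_0_compat; nra. }
  destruct (INR_unbounded (4 / (eta * eta) + 1)) as [M HM].
  exists M. intros m Hm.
  set (n := INR m).
  assert (Hn : n > 4 / (eta * eta) + 1).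
  { apply le_INR in Hm. unfold n. lra. }
  assert (H4 : 0 < 4 / (eta * eta)) by (apply Rdiv_lt_0_compat; nra).
  assert (Hn1 : 1 <= n) by lra.
  assert (Hn0 : 0 < n) by lra.
  set (L := ln n).
  assert (HL0 : 0 <= L) by (apply ln_ge0; auto).
  assert (HLn : L / n <= eta).
  { assert (Hs : 0 < sqrt n) by (apply sqrt_lt_R0; lra).
    assert (Hss : sqrt n * sqrt n = n) by (apply sqrt_sqrt; lra).
    assert (HL2 : L <= 2 * sqrt n) by (apply ln_le_2sqrt; auto).
    assert (Hen : eta * eta * n >= 4).
    { apply Rle_ge. assert (eta * eta * (4 / (eta*eta)) = 4) by (field; lra). nra. }
    assert (Hes : 2 <= eta * sqrt n).
    { assert (0 < eta * sqrt n) by nra. nra. }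
    apply (Rmult_le_reg_r n); [lra|]. unfold Rdiv. rewrite Rmult_assoc, Rinv_l by lra.
    nra. }
  assert (Heta1 : eta <= / (2 * k)) by apply Rmin_l.
  assert (Heta2 : eta <= eps / (w * k + 1)) by apply Rmin_r.
  set (x := k * L / n).
  assert (Hx : x = k * (L / n)) by (unfold x; field; lra).
  assert (Hx0 : 0 <= x) by (rewrite Hx; apply Rmult_le_pos; [lra| apply Rmult_le_pos; [lra | left; apply Rinv_0_lt_compat; lra]]).
  assert (Hx1 : x < 1).
  { rewrite Hx. assert (k * / (2 * k) = /2) by (field; lra).
    assert (k * (L / n) <= k * / (2 * k)) by (apply Rmult_le_compat_l; lra). lra. }
  set (y := w * x).
  assert (Hy0 : 0 <= y) by (unfold y; nra).
  assert (Hyeps : y <= eps).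
  { unfold y. rewrite Hx.
    assert (Hwk : 0 <= w * k) by nra.
    assert (L / n <= eps / (w * k + 1)) by lra.
    assert ((w * k + 1) * (eps / (w*k+1)) = eps) by (field; lra).
    assert (w * k * (L / n) <= w * k * (eps / (w * k + 1))) by (apply Rmult_le_compat_l; lra).
    assert (0 <= L / n) by (apply Rmult_le_pos; [lra | left; apply Rinv_0_lt_compat; lra]).
    nra. }
  assert (Hkt : 2 * t * (1 + y) <= k).
  { assert (2 * t * (1 + eps) = k) by (unfold eps; field; lra). nra. }
  set (a := Rpower (1 - x) w).
  assert (Ha0 : 0 < a) by (unfold a, Rpower; apply exp_pos).
  assert (Ha : a <= / (1 + y)).
  { unfold a, Rpower.
    assert (w * ln (1 - x) <= - y).
    { pose proof (ln_le_sub1 (1 - x) ltac:(lra)). unfold y. nra. }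
    apply Rle_trans with (exp (- y)). apply exp_mono; auto.
    rewrite exp_Ropp. apply Rinv_le_contravar; [lra|].
    pose proof (exp_ineq1_le y). lra. }
  set (b := /2 + /2 * a).
  set (c := /2 + /2 * / (1 + y)).
  assert (Hb0 : 0 < b) by (unfold b; lra).
  assert (Hbc : b <= c) by (unfold b, c; lra).
  assert (Hc0 : 0 < c).
  { unfold c. assert (0 < / (1+y)) by (apply Rinv_0_lt_compat; lra). lra. }
  assert (Hbm : b ^ m <= Rpower n (- t * w)).
  { apply Rle_trans with (c ^ m). apply pow_incr; lra.
    rewrite <- (Rpower_pow m c Hc0). unfold Rpower. apply exp_mono.
    fold n. fold L.
    assert (Hlc : ln c <= - (y / (2 * (1 + y)))).
    { pose proof (ln_le_sub1 c Hc0). unfold c in *.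
      assert (/2 + /2 * / (1 + y) - 1 = - (y / (2 * (1 + y)))) by (field; lra). lra. }
    assert (Hny : n * y = w * k * L) by (unfold y, x; field; lra).
    assert (Hkey : t * w * L * (2 * (1 + y)) <= n * y).
    { rewrite Hny. assert (0 <= w * L) by nra. nra. }
    assert (n * ln c <= - (n * y) / (2 * (1 + y))).
    { replace (- (n * y) / (2 * (1 + y))) with (n * (- (y / (2 * (1 + y))))) by (field; lra).
      apply Rmult_le_compat_l; lra. }
    assert (- (n * y) / (2 * (1 + y)) <= - t * w * L).
    { apply (Rmult_le_reg_r (2 * (1+y))); [lra|].
      replace (- (n * y) / (2 * (1 + y)) * (2 * (1 + y))) with (- (n * y)) by (field; lra).
      nra. }
    lra. }
  assert (Hp : 0 < / (1 + delta) ^ m) by (apply Rinv_0_lt_compat, pow_lt; lra).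
  assert (Hr : 0 < Rpower n (- t * w)) by (unfold Rpower; apply exp_pos).
  fold n. fold L. fold x. fold a. fold b.
  apply (Rmult_lt_reg_r (Rpower n (- t * w) + / (1 + delta) ^ m)); [lra|].
  unfold Rdiv. rewrite Rmult_assoc, Rinv_l by lra. lra.
Qed.
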